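(* Consider logical Bell-state measurements on two logical qubits $a,b$ encoded jointly (by a single encoder having access to both input states) into a set of physical qubits, each physical qubit being independently lost with probability $\varepsilon$. The logical Bell-state-measurement loss-tolerance threshold $\varepsilon^{(BSM)}$ of a family of such codes is at most $1$, and this bound is attained: there exists a family $\mathcal{C}$ of such two-logical-qubit codes (with $2n$ physical qubits, $n\ge 1$) such that for every $\varepsilon<1$ and every $\varepsilon'>0$ there is $C\in\mathcal{C}$ for which the logical Bell-state measurement succeeds with probability greater than $1-\varepsilon'$; i.e. $\varepsilon^{(BSM)}=1$ for this family.
   Context: A logical Bell-state measurement (BSM) on two logical qubits $a,b$ encoded by a code $C$ is the joint measurement of the two commuting logical operators $X_{aC}X_{bC}$ and $Z_{aC}Z_{bC}$, where $X,Z$ denote Pauli operators and the subscript $C$ denotes the logical operator on the code space; it succeeds if both outcomes are correctly obtained. The four Bell states are $|\Phi^\pm\rangle=(|00\rangle\pm|11\rangle)/\sqrt2$ and $|\Psi^\pm\rangle=(|01\rangle\pm|10\rangle)/\sqrt2$. A family $\mathcal{C}$ of codes has logical BSM loss threshold $\varepsilon^{(BSM)}$ equal to the supremum of values $e$ such that for every $\varepsilon<e$ and every $\varepsilon'>0$ there exists $C\in\mathcal{C}$ whose logical BSM (performed by any physically allowed measurement on the surviving physical qubits) succeeds with probability $>1-\varepsilon'$ when each physical qubit is independently lost with probability $\varepsilon$. *)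

(* Defs.v *)
From HB Require Import structures.
From mathcomp Require Import all_boot all_order all_algebra.
From mathcomp Require Import complex.
From mathcomp Require Import classical_sets reals.

Set Implicit Arguments.
Unset Strict Implicit.
Unset Printing Implicit Defensive.

Import Order.TTheory GRing.Theory Num.Theory.
Local Open Scope ring_scope.

Section QuantumBSM.
Variable R : realType.
Local Notation C := (R[i]).

(* Computational basis configurations of N physical qubits. *)
Definition cfg (N : nat) := {ffun 'I_N -> bool}.
(* State vectors in C^(2^N), and (matrices of) operators on C^(2^N). *)
Definition vec (N : nat) := cfg N -> C.
Definition op (N : nat) := cfg N -> cfg N -> C.

Definition inner N (psi phi : vec N) : C := \sum_x (psi x)^* * phi x.
Definition expect N (psi : vec N) (M : op N) : C :=
  \sum_x \sum_y (psi x)^* * M x y * psi y.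

(* positive semidefinite operator (over C this includes hermiticity) *)
Definition psd N (M : op N) : Prop := forall v : vec N, 0 <= expect v M.

Definition restr N (S : {set 'I_N}) (x : cfg N) : cfg N :=
  [ffun i => (i \in S) && x i].

(* M acts only on the surviving qubits S, i.e. M = E_S (x) Id_(lost qubits). *)
Definition local_on N (S : {set 'I_N}) (M : op N) : Prop :=
  exists E : op N, forall x y,
    M x y = if [forall i in ~: S, x i == y i] then E (restr S x) (restr S y)
            else 0.

(* Logical two-qubit basis |a b>, a,b : bool. *)
Definition lbasis := (bool * bool)%type.
Definition lvec := lbasis -> C.

(* A code C encoding the two logical qubits a,b jointly into N physical
   qubits: an isometry C^4 -> C^(2^N), given by the (orthonormal) images of
   the logical basis states |ab>. *)
Record code (N : nat) := Code {
  enc : lbasis -> vec N;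
  enc_orthonormal : forall i j, inner (enc i) (enc j) = (i == j)%:R
}.

Definition encode N (c : code N) (v : lvec) : vec N :=
  fun x => \sum_i v i * enc c i x.

(* Bell states, indexed by the outcome pair (sx, sz) of the measurement of
   (X_a X_b, Z_a Z_b): sx = false means eigenvalue +1 of X_a X_b, sz = false
   means eigenvalue +1 of Z_a Z_b.
   (false,false) = Phi+, (true,false) = Phi-, (false,true) = Psi+,
   (true,true) = Psi-. *)
Definition outcome := (bool * bool)%type.
Definition bell (k : outcome) : lvec := fun ab =>
  if (ab.1 (+) ab.2) == k.2 then
    (if k.1 && ab.1 then -1 else 1) / real_complex R (Num.sqrt (2 : R))
  else 0.

Definition povm_on N (S : {set 'I_N}) (M : outcome -> op N) : Prop :=
  (forall k, local_on S (M k) /\ psd (M k)) /\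
  (forall x y, \sum_k M k x y = (x == y)%:R).

(* Loss is heralded: a strategy chooses a measurement for each set S of
   surviving physical qubits. *)
Definition strategy N := {set 'I_N} -> outcome -> op N.
Definition valid_strategy N (st : strategy N) : Prop :=
  forall S, povm_on S (st S).

Definition surv_prob N (eps : R) (S : {set 'I_N}) : R :=
  eps ^+ #|~: S| * (1 - eps) ^+ #|S|.

Definition bsm_success N (c : code N) (eps : R) (st : strategy N)
    (k : outcome) : R :=
  \sum_(S : {set 'I_N}) surv_prob eps S * complex.Re (expect (encode c (bell k)) (st S k)).

Definition bsm_succeeds_gt N (c : code N) (eps p : R) : Prop :=
  exists st : strategy N, valid_strategy st /\ forall k, p < bsm_success c eps st k.

Definition code_family := set {N : nat & code N}.

Definition below_threshold (fam : code_family) (e : R) : Prop :=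
  forall eps : R, 0 <= eps <= 1 -> eps < e ->
  forall eps' : R, 0 < eps' ->
  exists2 c, fam c & bsm_succeeds_gt (projT2 c) eps (1 - eps').

Definition bsm_threshold (fam : code_family) : R :=
  sup [set e | below_threshold fam e].

End QuantumBSM.

(* Main.v *)
Set Warnings "-notation-overridden,-ambiguous-paths,-parsing,-coercions".
Require Import Defs.
From HB Require Import structures.
From mathcomp Require Import all_boot all_order all_algebra.
From mathcomp Require Import complex.
From mathcomp Require Import classical_sets reals.
From mathcomp Require Import lra.
Import Order.TTheory GRing.Theory Num.Theory.
Set Implicit Arguments.
Unset Strict Implicit.
Unset Printing Implicit Defensive.
Local Open Scope ring_scope.
Local Open Scope classical_set_scope.

Lemma sum4 (V : nmodType) (F : bool * bool -> V) :
  \sum_(p : bool * bool) F p = F (true,true) + F (true,false) + (F (false,true) + F (false,false)).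
Proof.
rewrite (eq_bigr (fun p => F (p.1, p.2))); last by case.
by rewrite -(pair_bigA _ (fun a b => F (a, b))) /= !big_bool /=.
Qed.

Definition bsgn (k : outcome) (ab : lbasis) : int :=
  if (ab.1 (+) ab.2) == k.2 then (if k.1 && ab.1 then -1 else 1) else 0.

Definition sq2 (R : realType) : R[i] := real_complex R (Num.sqrt (2 : R)).

Lemma bellE (R : realType) k ab : bell R k ab = (bsgn k ab)%:~R / sq2 R.
Proof.
rewrite /bell /bsgn; case: ifP => _; last by rewrite mul0r.
by case: ifP => _; rewrite ?mulrNz.
Qed.

Lemma sq2_half (R : realType) : (sq2 R)^-1^* * (sq2 R)^-1 = 2^-1.
Proof.
have h0 : 0 <= sq2 R by rewrite /sq2 ler0c sqrtr_ge0.
rewrite geC0_conj ?invr_ge0 // -invfM /sq2 -rmorphM /= -expr2 sqr_sqrtr //.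
by rewrite rmorph_nat.
Qed.

Lemma bell_conj (R : realType) k ab : (bell R k ab)^* = bell R k ab.
Proof.
have h0 : 0 <= (sq2 R)^-1 by rewrite invr_ge0 /sq2 ler0c sqrtr_ge0.
by rewrite bellE rmorphM rmorph_int /= geC0_conj.
Qed.

Lemma bell_prod (R : realType) k k' ab ab' :
  (bell R k ab)^* * bell R k' ab' = (bsgn k ab * bsgn k' ab')%:~R / 2.
Proof.
by rewrite !bellE rmorphM rmorph_int /= mulrACA -sq2_half intrM.
Qed.

Lemma bell_rows (R : realType) k k' :
  \sum_ab (bell R k ab)^* * bell R k' ab = (k == k')%:R.
Proof.
under eq_bigr do rewrite bell_prod.
rewrite -big_distrl /= -rmorph_sum /=.
have -> : \sum_(ab : lbasis) (bsgn k ab * bsgn k' ab) = 2 * (k == k')%:R.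
  by rewrite sum4; case: k k' => [[] []] [[] []].
by rewrite intrM /= mulrAC divff ?mul1r ?rmorph_nat ?intr_eq0 ?pnatr_eq0.
Qed.

Lemma bell_cols (R : realType) ab ab' :
  \sum_k (bell R k ab)^* * bell R k ab' = (ab == ab')%:R.
Proof.
under eq_bigr do rewrite bell_prod.
rewrite -big_distrl /= -rmorph_sum /=.
have -> : \sum_(k : outcome) (bsgn k ab * bsgn k ab') = 2 * (ab == ab')%:R.
  by rewrite sum4; case: ab ab' => [[] []] [[] []].
by rewrite intrM /= mulrAC divff ?mul1r ?rmorph_nat ?intr_eq0 ?pnatr_eq0.
Qed.

Lemma ReD (R : realType) (a b : R[i]) : complex.Re (a + b) = complex.Re a + complex.Re b.
Proof. by case: a => ? ?; case: b. Qed.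

Lemma inner_encode (R : realType) N (c : code R N) v w :
  inner (encode c v) (encode c w) = \sum_i (v i)^* * w i.
Proof.
rewrite /inner /encode.
under eq_bigr do rewrite rmorph_sum big_distrl /=.
rewrite exchange_big /=; apply: eq_bigr => i _.
under eq_bigr do rewrite big_distrr /=.
rewrite exchange_big /=.
have E : forall j, \sum_x (v i * enc c i x)^* * (w j * enc c j x) =
                   (v i)^* * w j * (i == j)%:R.
  move=> j; rewrite -(enc_orthonormal c) /inner big_distrr /=; apply: eq_bigr => x _.
  by rewrite rmorphM /= mulrACA.
under eq_bigr do rewrite E.
rewrite (bigD1 i) //= eqxx mulr1 big1 ?addr0 // => j /negbTE.
by rewrite eq_sym => ->; rewrite mulr0.
Qed.

Lemma local0 (R : realType) N (M : op R N) : local_on finset.set0 M ->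
  forall x y z, M x y = (x == y)%:R * M z z.
Proof.
case=> E HE x y z; rewrite !HE.
have r : forall x', restr finset.set0 x' = ([ffun=> false] : {ffun 'I_N -> bool}).
  by move=> x'; rewrite /restr; apply: eq_ffun => i; rewrite inE.
rewrite !r.
have -> : [forall i in ~: finset.set0, z i == z i] = true.
  by apply/forallP => i; rewrite eqxx implybT.
case: eqP => [<-|neq].
  have -> : [forall i in ~: finset.set0, x i == x i] = true.
    by apply/forallP => i; rewrite eqxx implybT.
  by rewrite mul1r.
case: forallP => [H|_]; last by rewrite mul0r.
exfalso; apply: neq; apply/(@ffunP _ _ (x : {ffun _ -> bool})) => i; have := H i.
by rewrite !inE /= => /eqP.
Qed.

Lemma expect_scalar (R : realType) N (M : op R N) (v : vec R N) z :
  (forall x y, M x y = (x == y)%:R * M z z) -> expect v M = M z z * inner v v.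
Proof.
move=> HM; rewrite /expect /inner big_distrr; apply: eq_bigr => x _ /=.
rewrite (bigD1 x) //= big1 ?addr0.
  by rewrite HM eqxx mul1r mulrCA mulrA.
by move=> y /negbTE; rewrite HM eq_sym => ->; rewrite mul0r mulr0 mul0r.
Qed.

Lemma not_above1 (R : realType) (fam : code_family R) (e : R) :
  1 < e -> ~ below_threshold fam e.
Proof.
move=> He Hb.
have h01 : (0 : R) <= (1 : R) <= (1 : R) by rewrite ler01 lexx.
have h2 : (0 : R) < 1/2 by rewrite mul1r invr_gt0 ltr0n.
have [[N c] _ [st [Hst Hk]]] := Hb 1 h01 He (1/2) h2.
simpl in st, Hst, Hk.
pose z : cfg N := [ffun=> false].
have Hsucc : forall k, bsm_success c 1 st k = complex.Re (st finset.set0 k z z).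
  move=> k; rewrite /bsm_success (bigD1 finset.set0) //= big1 ?addr0.
    rewrite /surv_prob expr1n mul1r subrr cards0 expr0 mul1r.
    rewrite (@expect_scalar _ _ _ _ z); last first.
      have [Hl _] := (proj1 (Hst finset.set0)) k.
      by move=> x y; exact: (local0 Hl x y z).
    by rewrite inner_encode bell_rows eqxx mulr1.
  move=> S /negbTE HS; rewrite /surv_prob subrr expr0n.
  have -> : (#|S| == 0)%N = false by rewrite cards_eq0 HS.
  by rewrite mulr0 mul0r.
have Hsum := (proj2 (Hst finset.set0)) z z.
rewrite sum4 eqxx in Hsum.
have := congr1 (@complex.Re R) Hsum; rewrite !ReD.
have -> : complex.Re (1 : R[i]) = 1 by [].
have := Hk (true, true); have := Hk (true, false).
have := Hk (false, true); have := Hk (false, false).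
rewrite !Hsucc; lra.
Qed.

Lemma surv_prod (R : realType) N (eps : R) (S : {set 'I_N}) :
  surv_prob eps S = \prod_i (if i \in S then 1 - eps else eps).
Proof.
rewrite /surv_prob (bigID (fun i => i \in S)) /= mulrC; congr (_ * _).
  rewrite -prodr_const; apply: eq_bigr => i ->; done.
rewrite -prodr_const; rewrite (eq_bigr (fun _ => eps)); last by move=> i /negbTE ->.
by apply: eq_bigl => i; rewrite !inE.
Qed.

Lemma ind_prod (R : realType) N (S T : {set 'I_N}) :
  ((S :&: T) == finset.set0)%:R = \prod_i (if (i \in S) && (i \in T) then 0 else 1 : R).
Proof.
case: eqP => [H|/eqP H].
  rewrite big1 // => i _; case: ifP => // HST.
  by move: (finset.in_set0 i); rewrite -H inE HST.
have [i Hi] := set0Pn _ H.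
by rewrite (bigD1 i) //= -finset.in_setI Hi mul0r.
Qed.

Lemma sum_sets (R : realType) N (G : {ffun 'I_N -> bool} -> R) :
  \sum_(S : {set 'I_N}) G [ffun i => i \in S] = \sum_f G f.
Proof.
rewrite (reindex (fun f : {ffun 'I_N -> bool} => [set i | f i]%SET)) /=.
  by apply: eq_bigr => f _; congr G; apply/ffunP => i; rewrite !ffunE inE.
exists (fun S : {set 'I_N} => [ffun i => i \in S]) => [f _|S _].
  by apply/ffunP => i; rewrite !ffunE inE.
by apply/finset.setP => i; rewrite !inE ffunE.
Qed.

Lemma surv_sum (R : realType) N (eps : R) (T : {set 'I_N}) :
  \sum_(S : {set 'I_N}) surv_prob eps S * ((S :&: T) == finset.set0)%:R = eps ^+ #|T|.
Proof.
pose F (i : 'I_N) (b : bool) := if b then (if i \in T then 0 else 1 - eps) else eps.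
have E : forall S : {set 'I_N}, surv_prob eps S * ((S :&: T) == finset.set0)%:R
   = \prod_i F i ([ffun j => j \in S] i).
  move=> S; rewrite surv_prod ind_prod -big_split /=; apply: eq_bigr => i _.
  rewrite ffunE /F; case: (i \in S); case: (i \in T) => /=; 
    by rewrite ?mulr0 ?mulr1.
under eq_bigr do rewrite E.
rewrite (sum_sets (fun f => \prod_i F i (f i))).
rewrite -bigA_distr_bigA /= -prodr_const [RHS]big_mkcond /=.
apply: eq_bigr => i _; rewrite big_bool /F.
by case: (i \in T) => /=; rewrite ?add0r ?subrK.
Qed.

Lemma sum_delta (R : realType) (T : finType) (i : T) (F : T -> R[i]) :
  \sum_j (i == j)%:R * F j = F i.
Proof.
rewrite (bigD1 i) //= eqxx mul1r big1 ?addr0 // => j /negbTE.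
by rewrite eq_sym => ->; rewrite mul0r.
Qed.

Definition encf (R : realType) N (w : outcome -> cfg N) (ab : lbasis) : vec R N :=
  fun x => \sum_k bell R k ab * (x == w k)%:R.

Lemma encf_ortho (R : realType) N (w : outcome -> cfg N) : injective w ->
  forall ab ab', inner (encf R w ab) (encf R w ab') = (ab == ab')%:R.
Proof.
move=> winj ab ab'; rewrite /inner /encf.
under eq_bigr do rewrite rmorph_sum big_distrl /=.
rewrite exchange_big /= -bell_cols; apply: eq_bigr => k _.
have E : forall x, (bell R k ab * (x == w k)%:R)^* *
   (\sum_k' bell R k' ab' * (x == w k')%:R) =
   (w k == x)%:R * ((bell R k ab)^* * \sum_k' bell R k' ab' * (x == w k')%:R).
  move=> x; rewrite rmorphM /= conjC_nat eq_sym.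
  by rewrite mulrAC mulrC.
under eq_bigr do rewrite E.
rewrite sum_delta; congr (_ * _).
under eq_bigr do rewrite (inj_eq winj) mulrC.
by rewrite sum_delta.
Qed.

Lemma encf_bell (R : realType) N (w : outcome -> cfg N) k x :
  \sum_ab bell R k ab * encf R w ab x = (x == w k)%:R.
Proof.
rewrite /encf.
under eq_bigr do rewrite big_distrr /=.
rewrite exchange_big /=.
have E : forall k', \sum_ab bell R k ab * (bell R k' ab * (x == w k')%:R) =
   (k == k')%:R * (x == w k')%:R.
  move=> k'; rewrite -bell_rows big_distrl /=; apply: eq_bigr => ab _.
  by rewrite bell_conj mulrA.
under eq_bigr do rewrite E.
by rewrite sum_delta.
Qed.

Definition wf N (A : {set 'I_N}) (k : outcome) : cfg N :=
  [ffun i => if i \in A then k.1 else k.2].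

Definition gS (R : realType) N (A S : {set 'I_N}) (k : outcome) (x : cfg N) : R[i] :=
  match [pick i in S :&: A], [pick j in S :&: ~: A] with
  | Some i, Some j => ((x i == k.1) && (x j == k.2))%:R
  | _, _ => (k == (false, false))%:R
  end.

Definition stf (R : realType) N (A : {set 'I_N}) : strategy R N :=
  fun S k x y => (x == y)%:R * gS R A S k x.

Lemma gS_restr (R : realType) N (A S : {set 'I_N}) k x :
  gS R A S k (restr S x) = gS R A S k x.
Proof.
rewrite /gS; case: pickP => [i Hi|//]; case: pickP => [j Hj|//].
move: Hi Hj; rewrite !inE => /andP[Hi _] /andP[Hj _].
by rewrite /restr !ffunE Hi Hj.
Qed.

Lemma expect_diag (R : realType) N (f : cfg N -> R[i]) (v : vec R N) :
  expect v (fun x y => (x == y)%:R * f x) = \sum_x (v x)^* * v x * f x.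
Proof.
rewrite /expect; apply: eq_bigr => x _ /=.
rewrite (bigD1 x) //= big1 ?addr0.
  by rewrite eqxx mul1r mulrAC.
by move=> y /negbTE; rewrite eq_sym => ->; rewrite mul0r mulr0 mul0r.
Qed.

Lemma gS_sum (R : realType) N (A S : {set 'I_N}) x :
  \sum_k gS R A S k x = 1.
Proof.
rewrite /gS; case: pickP => [i Hi|_]; first case: pickP => [j Hj|_].
- rewrite -[RHS](sum_delta (x i, x j) (fun _ => 1)).
  by apply: eq_bigr => -[a b] _; rewrite mulr1 /= xpair_eqE eq_sym [_ == b]eq_sym.
- rewrite -[RHS](sum_delta (false, false) (fun _ => 1)).
  by apply: eq_bigr => k _; rewrite mulr1 eq_sym.
- rewrite -[RHS](sum_delta (false, false) (fun _ => 1)).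
  by apply: eq_bigr => k _; rewrite mulr1 eq_sym.
Qed.

Lemma stf_valid (R : realType) N (A : {set 'I_N}) : valid_strategy (stf R A).
Proof.
move=> S; split; last first.
  by move=> x y; rewrite /stf -big_distrr /= gS_sum mulr1.
move=> k; split.
  exists (stf R A S k) => x y; rewrite /stf.
  case: (x =P y) => [<-|ne].
    have -> : [forall i in ~: S, x i == x i] = true.
      by apply/forallP => i; rewrite eqxx implybT.
    by rewrite eqxx gS_restr.
  case: forallP => [H|_]; last by rewrite mul0r.
  have -> : (restr S x == restr S y) = false.
    apply/negbTE/eqP => E; apply: ne; apply/ffunP => i.
    case Hi: (i \in S).
      by have := congr1 (fun f : cfg N => f i) E; rewrite /restr !ffunE Hi.
    by have := H i; rewrite !inE Hi /= => /eqP.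
  by rewrite /= !mul0r.

move=> v; rewrite /stf expect_diag; apply: sumr_ge0 => x _.
apply: mulr_ge0; first by rewrite mulrC mul_conjC_ge0.
rewrite /gS; case: pickP => [i _|_]; first case: pickP => [j _|_]; exact: ler0n.
Qed.

Lemma Re_b (R : realType) (b : bool) : complex.Re ((b%:R : R[i])) = (b%:R : R).
Proof. by case: b. Qed.

Lemma surv_ge0 (R : realType) N (eps : R) (S : {set 'I_N}) :
  0 <= eps <= 1 -> 0 <= surv_prob eps S.
Proof.
case/andP => h0 h1; rewrite /surv_prob mulr_ge0 ?exprn_ge0 //.
by rewrite subr_ge0.
Qed.

Lemma success_bound (R : realType) N (A : {set 'I_N}) (c : code R N) (eps : R) k :
  (forall ab x, enc c ab x = encf R (wf A) ab x) -> 0 <= eps <= 1 ->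
  1 - eps ^+ #|A| - eps ^+ #|~: A| <= bsm_success c eps (stf R A) k.
Proof.
move=> Hc Heps.
have Hv : forall x, encode c (bell R k) x = (x == wf A k)%:R.
  move=> x; rewrite /encode; under eq_bigr do rewrite Hc; exact: encf_bell.
have He : forall S, expect (encode c (bell R k)) (stf R A S k) = gS R A S k (wf A k).
  move=> S; rewrite /stf expect_diag.
  under eq_bigr do rewrite Hv conjC_nat -natrM mulnb andbb eq_sym.
  exact: sum_delta.
have Hg : forall S : {set 'I_N},
    1 - ((S :&: A) == finset.set0)%:R - ((S :&: ~: A) == finset.set0)%:R
    <= complex.Re (gS R A S k (wf A k)).
  move=> S; rewrite /gS; case: pickP => [i Hi|H0]; first case: pickP => [j Hj|H0].
  - move: (Hi) (Hj); rewrite !inE => /andP[_ HiA] /andP[_ HjA].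
    rewrite /wf !ffunE HiA (negbTE HjA) !eqxx /=.
    have h1 : 0 <= (((S :&: A) == finset.set0)%:R : R) by exact: ler0n.
    have h2 : 0 <= (((S :&: ~: A) == finset.set0)%:R : R) by exact: ler0n.
    lra.
  - have -> : (S :&: ~: A) == finset.set0.
      by apply/eqP/finset.setP => j; rewrite H0 inE.
    have h1 : 0 <= (((S :&: A) == finset.set0)%:R : R) by exact: ler0n.
    have h2 : (0 : R) <= ((k == (false, false)) %:R : R) by exact: ler0n.
    rewrite Re_b /=; lra.
  - have -> : (S :&: A) == finset.set0.
      by apply/eqP/finset.setP => j; rewrite H0 inE.
    have h1 : 0 <= (((S :&: ~: A) == finset.set0)%:R : R) by exact: ler0n.
    have h2 : (0 : R) <= ((k == (false, false)) %:R : R) by exact: ler0n.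
    rewrite Re_b /=; lra.
have T0 : \sum_(S : {set 'I_N}) surv_prob eps S = 1.
  have := surv_sum eps (finset.set0 : {set 'I_N}); rewrite cards0 expr0 => <-.
  by apply: eq_bigr => S _; rewrite finset.setI0 eqxx mulr1.
have key : \sum_(S : {set 'I_N}) surv_prob eps S *
    (1 - ((S :&: A) == finset.set0)%:R - ((S :&: ~: A) == finset.set0)%:R)
    = 1 - eps ^+ #|A| - eps ^+ #|~: A|.
  under eq_bigr do rewrite mulrBr mulrBr mulr1.
  by rewrite !sumrB !surv_sum T0.
rewrite -key; apply: ler_sum => S _; rewrite He.
by apply: ler_wpM2l; [exact: surv_ge0 | exact: Hg].
Qed.

Lemma leq_m2m n : (n.+1 <= 2 * n.+1)%N.
Proof. by rewrite mul2n -addnn leq_addr. Qed.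

Definition Aset n : {set 'I_(2 * n.+1)} := (widen_ord (leq_m2m n)) @: [set: 'I_n.+1]%SET.

Lemma widen_inj n : injective (widen_ord (leq_m2m n)).
Proof. by move=> i j /(f_equal (@nat_of_ord _)) /= /val_inj. Qed.

Lemma card_A n : #|Aset n| = n.+1.
Proof. by rewrite card_imset ?cardsT ?card_ord //; exact: widen_inj. Qed.

Lemma card_CA n : #|~: Aset n| = n.+1.
Proof.
have := cardsC (Aset n); rewrite card_A card_ord => H.
apply/eqP; rewrite -(eqn_add2l n.+1) H.
by rewrite mul2n -addnn.
Qed.

Lemma w_inj n : injective (wf (Aset n)).
Proof.
have Ha0 : widen_ord (leq_m2m n) ord0 \in Aset n.
  by rewrite mem_imset ?inE //; exact: widen_inj.
have : (0 < #|~: Aset n|)%N by rewrite card_CA.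
case/card_gt0P => b0 Hb0; rewrite inE in Hb0.
move=> k k' E.
have E1 := congr1 (fun f : cfg _ => f (widen_ord (leq_m2m n) ord0)) E.
have E2 := congr1 (fun f : cfg _ => f b0) E.
rewrite /wf /= !ffunE Ha0 in E1; rewrite /wf /= !ffunE (negbTE Hb0) in E2.
by move: E1 E2; case: k {E} => a b; case: k' => a' b' /= -> ->.
Qed.

Definition Cf (R : realType) n : code R (2 * n.+1) :=
  @Code R _ (encf R (wf (Aset n))) (encf_ortho R (@w_inj n)).

Lemma bernoulli (R : realType) (d : R) n : 0 <= d -> 1 + n%:R * d <= (1 + d) ^+ n.
Proof.
move=> d0; elim: n => [|n IH]; first by rewrite mul0r addr0 expr0.
rewrite exprS -addn1 natrD mulrDl mul1r.
have hn : (0 : R) <= n%:R by exact: ler0n.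
nra.
Qed.

Lemma exists_small (R : realType) (eps eps' : R) :
  0 <= eps -> eps < 1 -> 0 < eps' -> exists n, 2 * eps ^+ n.+1 < eps'.
Proof.
move=> e0 e1 e'0.
have [->|epos] := eqVneq eps 0.
  by exists 0%N; rewrite expr1 mulr0.
have ep : 0 < eps by rewrite lt_def epos e0.
pose d := eps^-1 - 1.
have dpos : 0 < d.
  by rewrite /d subr_gt0 invf_gt1.
pose n := Num.Def.archi_bound (2 / (eps' * d)).
have Hn : 2 / (eps' * d) < n%:R.
  by apply: archi_boundP; rewrite divr_ge0 // mulr_ge0 // ltW.
rewrite ltr_pdivrMr ?mulr_gt0 // in Hn.
exists n.
have Hq := bernoulli n (ltW dpos).
have Hpq : eps ^+ n * (1 + d) ^+ n = 1.
  by rewrite -exprMn /d addrC subrK divff ?expr1n.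
have hp : 0 < eps ^+ n by rewrite exprn_gt0.
have hn : (0 : R) <= n%:R by exact: ler0n.
set p := eps ^+ n in Hpq hp *; set q := (1 + d) ^+ n in Hq Hpq.
have Hq2 : 2 < eps' * q.
  have : eps' * (1 + n%:R * d) <= eps' * q by rewrite ler_pM2l.
  have : 0 <= eps' by exact: ltW.
  nra.
have Hs : 2 * p < eps'.
  have E : eps' = eps' * q * p by rewrite -mulrA [q * p]mulrC Hpq mulr1.
  rewrite [X in _ < X]E.
  by rewrite ltr_pM2r // mulrC.
rewrite exprS.
have : eps * p <= p by rewrite ler_piMl // ltW.
rewrite -/p; lra.
Qed.

Unset Implicit Arguments.

Theorem lemma3 (R : realType) :
  (forall fam : code_family R, bsm_threshold fam <= 1) /\
  exists Cf : forall n : nat, code R (2 * n.+1),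
    let fam : code_family R := [set existT _ (2 * n.+1)%N (Cf n) | n in [set: nat]] in
    below_threshold fam 1 /\ bsm_threshold fam = 1.
Proof.
have ub : forall fam : code_family R, bsm_threshold fam <= 1.
  move=> fam; apply: ge_sup.
    exists 0 => eps /andP[e0 _] elt; exfalso.
    by move: (le_lt_trans e0 elt); rewrite ltxx.
  move=> e He; rewrite leNgt; apply/negP => H; exact: (not_above1 H He).
split; first exact: ub.
exists (Cf R) => fam.
have Hb : below_threshold fam 1.
  move=> eps /andP[e0 e1] elt eps' e'0.
  have [n Hn] := exists_small e0 elt e'0.
  exists (existT _ (2 * n.+1)%N (Cf R n)); first by exists n.
  exists (stf R (Aset n)); split; first exact: stf_valid.
  move=> k; apply: lt_le_trans (success_bound k _ _) => //=.
    rewrite card_A card_CA; lra.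
  by rewrite e0 e1.
split => //.
apply/eqP; rewrite eq_le ub /=.
apply: sup_upper_bound => //; split; first by exists 1.
exists 1 => e He; rewrite leNgt; apply/negP => H; exact: (not_above1 H He).
Qed.
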